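(* Let $H_\alpha=-\Delta_\alpha+V$ be the Schrödinger operator with periodic magnetic potential $\alpha$ and periodic electric potential $V$ on a periodic graph $\mathcal G$. Fix a basis $\{\mathbf c_1,\dots,\mathbf c_\beta\}$ of the cycle space of $\mathcal G_*$ such that $\tau(\mathbf c_1),\dots,\tau(\mathbf c_d)$ is the standard basis of $\mathbb Z^d$ and $\{\mathbf c_{d+1},\dots,\mathbf c_\beta\}$ is a basis of the space $\mathcal C^0$ of cycles of $\mathcal G_*$ with zero index, let $\mathcal P$ be the associated projection (see context), and put $k_o=-(\alpha(\mathbf c_1),\dots,\alpha(\mathbf c_d))$. (i) For every $n\in\mathbb N$ and $\tilde k\in\mathbb T^d$, $$\operatorname{Tr}H_\alpha^n(\tilde k+k_o)=\sum_{\mathbf c\in\widetilde{\mathcal C}_n}\omega(\mathbf c)e^{-i\phi_o(\mathbf c,\tilde k)}=\sum_{\mathbf c\in\widetilde{\mathcal C}_n}\omega(\mathbf c)\cos\phi_o(\mathbf c,\tilde k),\qquad \phi_o(\mathbf c,\tilde k)=\alpha(\mathcal P\mathbf c)+\langle\tau(\mathbf c),\tilde k\rangle,$$ or, in Fourier form, $\operatorname{Tr}H_\alpha^n(\tilde k+k_o)=\sum_{\mathrm m\in\mathbb Z^d,\|\mathrm m\|\le n\tau_+}\mathcal T^o_{\alpha,n,\mathrm m}e^{-i\langle\mathrm m,\tilde k\rangle}$ with $\mathcal T^o_{\alpha,n,\mathrm m}=\sum_{\mathbf c\in\widetilde{\mathcal C}_n^{\mathrm m}}\omega(\mathbf c)e^{-i\alpha(\mathcal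 P\mathbf c)}$, where $\tau_+=\max_{\mathbf e\in\mathcal A_*}\|\tau(\mathbf e)\|$. In particular, if $\beta=d$, then $\mathcal P\mathbf c=0$ for all $\mathbf c\in\widetilde{\mathcal C}$ and $\operatorname{Tr}H_\alpha^n(\tilde k+k_o)=\operatorname{Tr}H_0^n(\tilde k)$ for all $n\in\mathbb N$. (ii) If two periodic magnetic potentials $\alpha_1,\alpha_2$ have the same flux through each of the $\beta-d$ basis cycles $\mathbf c_{d+1},\dots,\mathbf c_\beta$ of $\mathcal C^0$, then $\sigma(H_{\alpha_1})=\sigma(H_{\alpha_2})$.
   Context: Let $\Gamma\subset\mathbb R^d$ be a lattice with basis $\mathfrak a_1,\dots,\mathfrak a_d$ and fundamental cell $\Omega=\{\sum_sx_s\mathfrak a_s:(x_s)\in[0,1)^d\}$. Let $\mathcal G=(\mathcal V,\mathcal E)$ be a connected, locally finite, infinite graph embedded in $\mathbb R^d$ (loops, multiple edges allowed), invariant under $\Gamma$-translations, with finite quotient $\mathcal G_*=(\mathcal V_*,\mathcal E_* )$; $\nu=\#\mathcal V_*$; Betti number $\beta=\#\mathcal E_*-\#\mathcal V_*+1$. Oriented edges $\mathcal A,\mathcal A_*$; $\underline{\mathbf e}$ inverse; $\varkappa_x$ = number of oriented edges starting at $x$. Edge index: $x=x_0+[x]$, $x_0\in\mathcal V\cap\Omega$, $[x]\in\Gamma$ with coordinates $[x]_{\mathbb A}\in\mathbb Z^d$; $\tau((x,y))=[y]_{\mathbb A}-[x]_{\mathbb A}$, defined on $\mathcal A_*$. Periodic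 magnetic potential $\alpha:\mathcal A\to\mathbb R$ ($\alpha(\underline{\mathbf e})=-\alpha(\mathbf e)$, $\Gamma$-invariant); $V$ real $\Gamma$-periodic. $H_\alpha=-\Delta_\alpha+V$, $\Delta_\alpha=\varkappa-A_\alpha$, $(A_\alpha f)_x=\sum_{\mathbf e=(x,y)\in\mathcal A}e^{i\alpha(\mathbf e)}f_y$; fiber operators $H_\alpha(k)=A_\alpha(k)-\varkappa+V$ on $\mathbb C^\nu$, $(A_\alpha(k)f)_x=\sum_{\mathbf e=(x,y)\in\mathcal A_*}e^{i(\alpha(\mathbf e)+\langle\tau(\mathbf e),k\rangle)}f_y$, $k\in\mathbb T^d=\mathbb R^d/(2\pi\mathbb Z)^d$; $\sigma(H_\alpha)=\bigcup_k\sigma(H_\alpha(k))$; $H_0$ is $H_\alpha$ with $\alpha=0$. Cycles: ordered sequences of oriented edges $(\mathbf e_1,\dots,\mathbf e_n)$ with $\mathbf e_s=(x_{s-1},x_s)$, $x_n=x_0$ (cyclic shifts distinct; backtracking allowed); index $\tau(\mathbf c)=\sum\tau(\mathbf e)$; flux $\alpha(\mathbf c)=(\sum\alpha(\mathbf e))\bmod 2\pi$; both extend additively to the integer cycle space (first homology with $\mathbb Z$ coefficients). Modified graph $\widetilde{\mathcal G}_*$: add at each $x\in\mathcal V_*$ one oriented loop $\mathbf e_x$ (single oriented edge) with $\tau(\mathbf e_x)=0$, $\alpha(\mathbf e_x)=0$; weights $\omega(\mathbf e)=1$ on $\mathcal A_*$, $\omega(\mathbf e_x)=V_x-\varkappa_x$,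 $\omega(\mathbf c)=\prod_s\omega(\mathbf e_s)$; $\widetilde{\mathcal C}$ is the cycle space of $\widetilde{\mathcal G}_*$, $\widetilde{\mathcal C}_n$ (resp. $\widetilde{\mathcal C}_n^{\mathrm m}$) the set of cycles of length $n$ (resp. and index $\mathrm m$). Such a basis $\mathbf c_1,\dots,\mathbf c_\beta$ exists, and $\{\mathbf c_1,\dots,\mathbf c_\beta\}\cup\{\mathbf e_x\}$ is a basis of $\widetilde{\mathcal C}$, so every $\mathbf c\in\widetilde{\mathcal C}$ is uniquely $\mathbf c=\sum_{s=1}^\beta n_s(\mathbf c)\mathbf c_s+\sum_x n_x(\mathbf c)\mathbf e_x$ with integer coefficients; the projection is $\mathcal P\mathbf c=\sum_{s=d+1}^\beta n_s(\mathbf c)\mathbf c_s\in\mathcal C^0$. *)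

(* Defs.v *)
From HB Require Import structures.
From mathcomp Require Import all_boot all_order all_algebra.
From mathcomp Require Import complex.
From mathcomp Require Import reals trigo.
From Stdlib Require Import ClassicalEpsilon.

Set Implicit Arguments.
Unset Strict Implicit.
Unset Printing Implicit Defensive.

Import Order.TTheory GRing.Theory Num.Theory.
Local Open Scope ring_scope.

(* The finite quotient graph G_* is given by a vertex type [Vt], a type [E]
   of (unoriented) edges with endpoints [src e] and [tgt e] (loops and
   multiple edges allowed).  The oriented edges A_* are [E * bool]:
   (e,true) is e oriented from src e to tgt e, (e,false) is its inverse. *)

Section QuotientGraph.
Variables (R : realType) (d : nat) (Vt E : finType)
          (src tgt : E -> Vt) (tau : E -> 'I_d -> int).

Definition osrc (a : E * bool) : Vt := if a.2 then src a.1 else tgt a.1.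
Definition otgt (a : E * bool) : Vt := if a.2 then tgt a.1 else src a.1.
Definition otau (a : E * bool) (i : 'I_d) : int :=
  if a.2 then tau a.1 i else - tau a.1 i.
Definition oalpha (alpha : E -> R) (a : E * bool) : R :=
  if a.2 then alpha a.1 else - alpha a.1.

Definition kappa (x : Vt) : nat := #|[pred a : E * bool | osrc a == x]|.

Definition expi (t : R) : R[i] := (cos t +i* sin t)%C.

Definition dotZR (m : 'I_d -> int) (k : 'I_d -> R) : R :=
  \sum_(i < d) (m i)%:~R * k i.

(* fiber operator H_alpha(k) = A_alpha(k) - kappa + V on C^nu,
   coordinates indexed through enum_val : 'I_#|Vt| -> Vt *)
Definition Hmat (alpha : E -> R) (V : Vt -> R) (k : 'I_d -> R)
  : 'M[R[i]]_#|Vt| :=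
  \matrix_(i, j)
    (\sum_(a : E * bool | (osrc a == enum_val i) && (otgt a == enum_val j))
        expi (oalpha alpha a + dotZR (otau a) k)
     + (if i == j then (V (enum_val i) - (kappa (enum_val i))%:R)%:C%C
        else 0)).

Definition in_spectrum (alpha : E -> R) (V : Vt -> R) (lam : R[i]) : Prop :=
  exists k : 'I_d -> R, eigenvalue (Hmat alpha V k) lam.

(* ---- modified graph: oriented edges of G_* plus one loop e_x at each x ---- *)
Definition Wt := (E * bool + Vt)%type.
Definition wsrc (w : Wt) : Vt := match w with inl a => osrc a | inr x => x end.
Definition wtgt (w : Wt) : Vt := match w with inl a => otgt a | inr x => x end.
Definition wtau (w : Wt) (i : 'I_d) : int :=
  match w with inl a => otau a i | inr _ => 0 end.
Definition wweight (V : Vt -> R) (w : Wt) : R :=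
  match w with inl _ => 1 | inr x => V x - (kappa x)%:R end.

Definition closed_walk (s : seq Wt) : bool :=
  cycle (fun a b => wtgt a == wsrc b) s.
Definition walk_weight (V : Vt -> R) (s : seq Wt) : R :=
  \prod_(w <- s) wweight V w.
Definition walk_tau (s : seq Wt) (i : 'I_d) : int := \sum_(w <- s) wtau w i.

(* integer 1-chains on G_*: functions E -> int (coefficient of the forward
   orientation); the part on G_* of the chain of a walk *)
Definition chain_of_walk (s : seq Wt) (e : E) : int :=
  (count_mem (inl (e, true)) s)%:Z - (count_mem (inl (e, false)) s)%:Z.

Definition is_cycle (f : E -> int) : Prop :=
  forall v : Vt,
    \sum_(e : E) f e * ((tgt e == v)%:Z - (src e == v)%:Z) = 0.

Definition chain_index (f : E -> int) (i : 'I_d) : int :=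
  \sum_(e : E) f e * tau e i.
Definition chain_flux (alpha : E -> R) (f : E -> int) : R :=
  \sum_(e : E) (f e)%:~R * alpha e.

Variable r : nat. (* beta = d + r *)

Definition comb (bt : 'I_d -> E -> int) (b0 : 'I_r -> E -> int)
  (nt : 'I_d -> int) (n0 : 'I_r -> int) (e : E) : int :=
  \sum_(i < d) nt i * bt i e + \sum_(j < r) n0 j * b0 j e.

Definition cycle_basis (bt : 'I_d -> E -> int) (b0 : 'I_r -> E -> int) : Prop :=
  [/\ forall i, is_cycle (bt i),
      forall j, is_cycle (b0 j),
      forall f, is_cycle f ->
        exists nt n0, forall e, f e = comb bt b0 nt n0 e
    & forall nt n0, (forall e, comb bt b0 nt n0 e = 0) ->
        (forall i, nt i = 0) /\ (forall j, n0 j = 0)].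

Definition std_index (bt : 'I_d -> E -> int) : Prop :=
  forall i i', chain_index (bt i) i' = (i == i')%:Z.

Definition zero_index_basis (b0 : 'I_r -> E -> int) : Prop :=
  [/\ forall j, is_cycle (b0 j) /\ (forall i, chain_index (b0 j) i = 0),
      forall f, is_cycle f -> (forall i, chain_index f i = 0) ->
        exists n0, forall e, f e = \sum_(j < r) n0 j * b0 j e
    & forall n0, (forall e, \sum_(j < r) n0 j * b0 j e = 0) ->
        forall j, n0 j = 0].

(* the (unique, under cycle_basis) coordinates of a cycle in the basis *)
Definition coords (bt : 'I_d -> E -> int) (b0 : 'I_r -> E -> int)
  (f : E -> int) : ('I_d -> int) * ('I_r -> int) :=
  epsilon (inhabits ((fun _ => 0), (fun _ => 0)))
    (fun p => forall e, f e = comb bt b0 p.1 p.2 e).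

Definition projP (bt : 'I_d -> E -> int) (b0 : 'I_r -> E -> int)
  (f : E -> int) (e : E) : int :=
  \sum_(j < r) (coords bt b0 f).2 j * b0 j e.

Definition phi_o (alpha : E -> R) bt b0 (s : seq Wt) (k : 'I_d -> R) : R :=
  chain_flux alpha (projP bt b0 (chain_of_walk s)) + dotZR (walk_tau s) k.

Definition k_o (alpha : E -> R) (bt : 'I_d -> E -> int) (i : 'I_d) : R :=
  - chain_flux alpha (bt i).

Definition Tcoef (alpha : E -> R) (V : Vt -> R) bt b0 (n : nat)
  (m : 'I_d -> int) : R[i] :=
  \sum_(t : n.-tuple Wt |
          closed_walk t && [forall i, walk_tau t i == m i])
     (walk_weight V t)%:C%C
       * expi (- chain_flux alpha (projP bt b0 (chain_of_walk t))).

Definition sqnormZ (m : 'I_d -> int) : int := \sum_(i < d) m i ^+ 2.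
Definition tau2max : nat := \max_(e : E) `|sqnormZ (tau e)|%N.

(* sum over the ball {m in Z^d : ||m|| <= n tau_+}: we enumerate the box
   [-N, N]^d with N := n * tau_+^2 (>= n tau_+, since tau_+^2 is a natural
   number), keeping exactly the m with ||m||^2 <= n^2 tau_+^2. *)
Definition box_pt (N : nat) (j : {ffun 'I_d -> 'I_(N.*2.+1)}) (i : 'I_d) : int :=
  (j i)%:Z - N%:Z.

Definition sum_ball (n : nat) (F : ('I_d -> int) -> R[i]) : R[i] :=
  let N := (n * tau2max)%N in
  \sum_(j : {ffun 'I_d -> 'I_(N.*2.+1)} |
          sqnormZ (box_pt j) <= (n ^ 2 * tau2max)%N%:Z)
     F (box_pt j).

End QuotientGraph.

Definition adjG (Vt E : finType) (src tgt : E -> Vt) : rel Vt :=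
  fun u v => [exists e, ((src e == u) && (tgt e == v))
                        || ((src e == v) && (tgt e == u))].

(* Main.v *)
Require Import Defs.
From HB Require Import structures.
From mathcomp Require Import all_boot all_order all_algebra.
From mathcomp Require Import complex.
From mathcomp Require Import reals trigo.
From Stdlib Require Import ClassicalEpsilon.
From mathcomp Require Import ring lra zify.

Set Implicit Arguments.
Unset Strict Implicit.
Unset Printing Implicit Defensive.

Import Order.TTheory GRing.Theory Num.Theory.
Local Open Scope ring_scope.
Section Expi.
Variable R : realType.

Lemma expiD (a b : R) : expi (a + b) = expi a * expi b.
Proof.
rewrite /expi cosD sinD [RHS]/GRing.mul /=; congr (_ +i* _)%C; exact: addrC.
Qed.

Lemma expi0 : expi (0 : R) = 1.
Proof. by rewrite /expi cos0 sin0. Qed.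

Lemma expiN (a : R) : expi (- a) = ((expi a)^*)%C.
Proof. by rewrite /expi cosN sinN. Qed.

Lemma expi_conj_mul (a : R) : expi a * expi (- a) = 1.
Proof. by rewrite -expiD subrr expi0. Qed.

Lemma expi_neq0 (a : R) : expi a != 0.
Proof.
apply/negP=> /eqP H; have := expi_conj_mul a; rewrite H mul0r => /eqP.
by rewrite eq_sym oner_eq0.
Qed.

Lemma expi2pi (z : int) : expi (z%:~R * (pi *+ 2) : R) = 1.
Proof.
have Hn : forall n : nat, expi (n%:R * (pi *+ 2) : R) = 1.
  elim=> [|n IH]; first by rewrite mul0r expi0.
  by rewrite -addn1 natrD mulrDl mul1r expiD IH mul1r /expi cos2pi sin2pi.
case: z => n; first by rewrite -[(Posz n)%:~R]/(n%:R) Hn.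
rewrite NegzE mulrNz mulNr expiN.
by rewrite -[(Posz n.+1)%:~R]/(n.+1%:R) Hn conjc1.
Qed.

Lemma expi_cos (a : R) : expi a + expi (- a) = 2%:R * (cos a)%:C%C.
Proof.
rewrite /expi cosN sinN [LHS]/GRing.add /= subrr.
rewrite -[2%:R](rmorph_nat (real_complex R)) -rmorphM /=.
by rewrite /real_complex_def mulr_natl mulr2n.
Qed.

End Expi.
Section GenWalk.
Variables (T : eqType) (W : Type) (s t : W -> T).

Fixpoint wf (x : T) (p : seq W) (y : T) : bool :=
  if p is w :: p' then (s w == x) && wf (t w) p' y else x == y.

Definition wrel (a b : W) := t a == s b.

Lemma wf_cat x p1 y p2 z : wf x p1 y -> wf y p2 z -> wf x (p1 ++ p2) z.
Proof.
elim: p1 x => [|w p1 IH] x /=; first by move=> /eqP ->.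
by case/andP=> -> H1 H2; rewrite IH.
Qed.

Lemma wf_path w p w' : wf (t w) p (s w') = path wrel w (rcons p w').
Proof.
elim: p w => [|v p IH] w /=; first by rewrite /wrel andbT.
by rewrite IH /wrel eq_sym.
Qed.

Lemma wf_cycle x w p : wf x (w :: p) x = (s w == x) && cycle wrel (w :: p).
Proof.
rewrite /= -wf_path; apply/andP/andP; case=> /eqP Hw H; split=> //; subst x => //.
Qed.

Lemma path_map w p w' :
  path wrel w (rcons p w') -> map t (w :: p) = map s (rcons p w').
Proof.
elim: p w => [|v p IH] w /=; first by rewrite /wrel andbT => /eqP ->.
case/andP=> /eqP -> H; have := IH _ H; rewrite /= => ->.
by [].
Qed.

Lemma cycle_map p : cycle wrel p -> map t p = map s (rot 1 p).
Proof.
case: p => [|w p] // H.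
by rewrite rot1_cons (path_map H).
Qed.

End GenWalk.

Section MxWalk.
Variables (C : comNzRingType) (W : finType) (m : nat) (s t : W -> 'I_m)
  (c : W -> C).

Definition Mw : 'M[C]_m := \sum_(w : W) c w *: delta_mx (s w) (t w).

Lemma tuple_sum_cons n (F : n.+1.-tuple W -> C) :
  \sum_(q : n.+1.-tuple W) F q
  = \sum_(w : W) \sum_(p : n.-tuple W) F (cons_tuple w p).
Proof.
rewrite pair_big /=.
rewrite (reindex (fun wp : W * n.-tuple W => cons_tuple wp.1 wp.2)) //=.
exists (fun q => (thead q, behead_tuple q)) => [[w p] _ | q _] /=.
  by congr pair; apply: val_inj.
by apply: val_inj => /=; rewrite [in RHS](tuple_eta q).
Qed.

Lemma Mw_pow n x y :
  (Mw ^+ n) x y = \sum_(p : n.-tuple W | wf s t x p y) \prod_(w <- p) c w.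
Proof.
elim: n x y => [|n IH] x y.
  rewrite expr0 mxE.
  have Hp : forall p : 0.-tuple W, wf s t x p y = (x == y) && (p == [tuple]).
    by move=> p; rewrite [p]tuple0 /= andbT.
  rewrite (eq_bigl _ _ Hp); case: (x == y) => /=.
    by rewrite big_pred1_eq big_nil.
  by rewrite big1.
rewrite exprS -mulmxE mxE [RHS]big_mkcond tuple_sum_cons.
under eq_bigr do rewrite summxE.
under eq_bigr do rewrite mulr_suml.
rewrite exchange_big /=; apply: eq_bigr => w _.
rewrite (bigD1 (t w)) //= big1 ?addr0; last first.
  by move=> z /negPf Hz; rewrite !mxE Hz andbF /= mulr0 mul0r.
rewrite !mxE eqxx andbT IH mulr_sumr big_mkcond /=.
apply: eq_bigr => p _ /=.
rewrite eq_sym big_cons; case: (s w == x); case: (wf s t (t w) p y) => //=;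
  by rewrite ?mulr0n ?mulr1n ?mulr1 ?mulr0 ?mul0r.
Qed.

Lemma Mw_tr n :
  \tr (Mw ^+ n.+1)
  = \sum_(p : n.+1.-tuple W | cycle (wrel s t) p) \prod_(w <- p) c w.
Proof.
rewrite /mxtrace.
under eq_bigr do rewrite Mw_pow big_mkcond.
rewrite exchange_big [RHS]big_mkcond; apply: eq_bigr => p _.
case: p => [[|w p] Hp] //.
have H : forall i, wf s t i (Tuple Hp) i = (i == s w) && cycle (wrel s t) (Tuple Hp).
  by move=> i; rewrite [in RHS]eq_sym -(wf_cycle s t i w p).
under eq_bigr => i _ do rewrite H.
case: (cycle _ _) => /=.
  under eq_bigr => i _ do rewrite andbT.
  by rewrite -big_mkcond big_pred1_eq.
by rewrite big1 // => i _; rewrite andbF.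
Qed.

End MxWalk.
Lemma eq_rank (T : finType) (x : T) (i : 'I_#|T|) :
  (enum_rank x == i) = (x == enum_val i).
Proof.
by apply/eqP/eqP => [<-|->]; rewrite ?enum_rankK ?enum_valK.
Qed.

Lemma eq_rank' (T : finType) (x : T) (i : 'I_#|T|) :
  (i == enum_rank x) = (x == enum_val i).
Proof. by rewrite eq_sym eq_rank. Qed.

Lemma natr_b (C : pzSemiRingType) (b : bool) : (b%:R : C) = if b then 1 else 0.
Proof. by case: b. Qed.

Section Graph.
Variables (R : realType) (d : nat) (Vt E : finType) (src tgt : E -> Vt)
  (tau : E -> 'I_d -> int).

Local Notation W := (Wt Vt E).
Local Notation wsrc := (wsrc src tgt).
Local Notation wtgt := (wtgt src tgt).

Definition wth (al : E -> R) (k : 'I_d -> R) (w : W) : R :=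
  match w with inl a => oalpha al a + dotZR (otau tau a) k | inr _ => 0 end.

Definition cw (al : E -> R) (V : Vt -> R) (k : 'I_d -> R) (w : W) : R[i] :=
  (wweight src tgt V w)%:C%C * expi (wth al k w).

Definition rs (w : W) := enum_rank (wsrc w).
Definition rt (w : W) := enum_rank (wtgt w).

Lemma Hmat_Mw al V k : Hmat src tgt tau al V k = Mw rs rt (cw al V k).
Proof.
apply/matrixP => i j; rewrite !mxE summxE big_sumType /=; congr (_ + _).
  rewrite [LHS]big_mkcond /=; apply: eq_bigr => a _.
  rewrite !mxE /rs /rt /cw /= !eq_rank' natr_b.
  case: ((osrc src tgt a == enum_val i) && (otgt src tgt a == enum_val j)).
    by rewrite rmorph1 mul1r mulr1.
  by rewrite mulr0.
rewrite (bigD1 (enum_val i)) //= big1 ?addr0; last first.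
  move=> x /negPf Hx; rewrite !mxE /rs /rt /= !eq_rank' Hx /= ?natr_b ?mulr0n.
  exact: mulr0.
rewrite !mxE /rs /rt /= !eq_rank' eqxx /= /cw /= expi0 mulr1 natr_b.
have -> : (enum_val i == enum_val j) = (i == j).
  by apply/eqP/eqP => [/enum_val_inj|->].
by case: (i == j); rewrite ?mulr1 ?mulr0.
Qed.

Lemma tr_Hmat al V k n :
  \tr (Hmat src tgt tau al V k ^+ n.+1)
  = \sum_(t : n.+1.-tuple W | closed_walk src tgt t)
      (walk_weight src tgt V t)%:C%C * expi (\sum_(w <- t) wth al k w).
Proof.
rewrite Hmat_Mw Mw_tr.
have Hc : wrel rs rt =2 (fun a b => wtgt a == wsrc b).
  by move=> a b; rewrite /wrel /rs /rt (inj_eq enum_rank_inj).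
apply: eq_big => [t|t _]; first by rewrite /closed_walk (eq_cycle Hc).
rewrite /cw big_split /= /walk_weight rmorph_prod /=; congr (_ * _).
by rewrite (big_morph _ (@expiD R) (@expi0 R)).
Qed.

End Graph.
Section Chains.
Variables (R : realType) (d : nat) (Vt E : finType) (src tgt : E -> Vt)
  (tau : E -> 'I_d -> int).

Local Notation W := (Wt Vt E).
Local Notation wsrc := (wsrc src tgt).
Local Notation wtgt := (wtgt src tgt).

Definition og (M : zmodType) (g : E -> M) (w : W) : M :=
  match w with inl a => if a.2 then g a.1 else - g a.1 | inr _ => 0 end.

Lemma chain_cons (w : W) s e :
  chain_of_walk (w :: s) e
  = chain_of_walk s e + ((w == inl (e, true))%:Z - (w == inl (e, false))%:Z).
Proof. rewrite /chain_of_walk /=; lia. Qed.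

Lemma chain_nil e : chain_of_walk ([::] : seq W) e = 0.
Proof. by []. Qed.

Lemma sum_chain (M : zmodType) (g : E -> M) (s : seq W) :
  \sum_e g e *~ chain_of_walk s e = \sum_(w <- s) og g w.
Proof.
elim: s => [|w s IH]; first by rewrite big_nil big1.
under eq_bigr do rewrite chain_cons mulrzDr.
rewrite big_split /= IH big_cons addrC; congr (_ + _).
case: w => [[e0 b]|x] /=.
  rewrite (bigD1 e0) //= big1 ?addr0; last first.
    move=> e /negPf He.
    have H1 : (inl (e0, b) == inl (e, true) :> W) = false.
      by apply/negbTE/eqP => [[]] /eqP; rewrite eq_sym He.
    have H2 : (inl (e0, b) == inl (e, false) :> W) = false.
      by apply/negbTE/eqP => [[]] /eqP; rewrite eq_sym He.
    by rewrite H1 H2 subrr mulr0z.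
  have Hne : (inl (e0, true) == inl (e0, false) :> W) = false.
    by apply/negbTE/eqP => H; inversion H.
  by case: b; rewrite !eqxx /= ?Hne 1?eq_sym ?Hne /= ?subr0 ?sub0r ?mulrN1z.
by rewrite big1 // => e _; rewrite subrr mulr0z.
Qed.

Lemma flux_walk (al : E -> R) (s : seq W) :
  chain_flux al (chain_of_walk s) = \sum_(w <- s) og al w.
Proof. by rewrite -sum_chain; apply: eq_bigr => e _; rewrite mulrzl. Qed.

Lemma index_walk (s : seq W) i :
  chain_index tau (chain_of_walk s) i = walk_tau tau s i.
Proof.
rewrite /chain_index.
transitivity (\sum_e (tau e i) *~ chain_of_walk s e).
  by apply: eq_bigr => e _; rewrite mulrzz mulrC.
rewrite sum_chain /walk_tau; apply: eq_bigr => [[[e []]|x]] _ //=.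
Qed.

Lemma cycle_walk (s : seq W) :
  closed_walk src tgt s -> is_cycle src tgt (chain_of_walk s).
Proof.
move=> Hc v.
transitivity (\sum_e ((tgt e == v)%:Z - (src e == v)%:Z) *~ chain_of_walk s e).
  by apply: eq_bigr => e _; rewrite mulrzz mulrC.
rewrite sum_chain.
transitivity (\sum_(w <- s) ((wtgt w == v)%:Z - (wsrc w == v)%:Z)).
  apply: eq_bigr => [[[e []]|x]] _ //=; first by rewrite opprB.
  by rewrite subrr.
rewrite sumrB; apply/eqP; rewrite subr_eq0; apply/eqP.
rewrite -(big_map wtgt xpredT (fun x => (x == v)%:Z)).
rewrite -(big_map wsrc xpredT (fun x => (x == v)%:Z)).
rewrite (cycle_map (s := wsrc) (t := wtgt) Hc) big_map.
have Hp : perm_eq (rot 1 s) s by rewrite perm_rot.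
by rewrite [LHS]big_map (perm_big _ Hp).
Qed.

Lemma dotZR_ext (m1 m2 : 'I_d -> int) (k : 'I_d -> R) :
  m1 =1 m2 -> dotZR m1 k = dotZR m2 k.
Proof. by move=> H; apply: eq_bigr => i _; rewrite H. Qed.

Lemma dotZR_walk (s : seq W) (k : 'I_d -> R) :
  dotZR (walk_tau tau s) k = \sum_(w <- s) dotZR (wtau tau w) k.
Proof.
elim: s => [|w s IH].
  by rewrite big_nil /dotZR big1 // => i _; rewrite /walk_tau big_nil mul0r.
rewrite big_cons -IH /dotZR -big_split /=; apply: eq_bigr => i _.
by rewrite /walk_tau big_cons intrD mulrDl.
Qed.

Lemma wth_walk (al : E -> R) (k : 'I_d -> R) (s : seq W) :
  \sum_(w <- s) wth tau al k w
  = chain_flux al (chain_of_walk s) + dotZR (walk_tau tau s) k.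
Proof.
rewrite flux_walk dotZR_walk -big_split /=; apply: eq_bigr => [[a|x]] _ //=.
by rewrite /dotZR big1 ?addr0 // => i _; rewrite mul0r.
Qed.

End Chains.
Lemma map_mxX (R1 R2 : comNzRingType) (f : {rmorphism R1 -> R2}) m
  (A : 'M[R1]_m) n : map_mx f (A ^+ n) = (map_mx f A) ^+ n.
Proof.
elim: n => [|n IH]; first by rewrite !expr0 map_mx1.
by rewrite !exprS -!mulmxE map_mxM IH.
Qed.

Lemma trmxX (C : comNzRingType) m (A : 'M[C]_m) n : (A ^+ n)^T = (A^T) ^+ n.
Proof.
elim: n => [|n IH]; first by rewrite !expr0 trmx1.
by rewrite exprS exprSr -!mulmxE trmx_mul IH.
Qed.

Lemma tr_conj_pow (R : realType) m (A : 'M[R[i]]_m) n :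
  A^T = map_mx conjc A -> conjc (\tr (A ^+ n)) = \tr (A ^+ n).
Proof.
move=> H.
have -> : conjc (\tr (A ^+ n)) = \tr (map_mx conjc (A ^+ n)).
  by rewrite (trace_map_mx conjc).
by rewrite (map_mxX conjc) -H -trmxX mxtrace_tr.
Qed.

Section Basis.
Variables (R : realType) (d : nat) (Vt E : finType) (src tgt : E -> Vt)
  (tau : E -> 'I_d -> int) (r : nat) (bt : 'I_d -> E -> int)
  (b0 : 'I_r -> E -> int).
Hypotheses (Hb : cycle_basis src tgt bt b0) (Hs : std_index tau bt)
  (Hz : zero_index_basis src tgt tau b0).

Local Notation W := (Wt Vt E).

Lemma flux_lin p (c : 'I_p -> int) (g : 'I_p -> E -> int) (al : E -> R) :
  \sum_e (\sum_j c j * g j e)%:~R * al e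
  = \sum_j (c j)%:~R * chain_flux al (g j).
Proof.
transitivity (\sum_e \sum_j (c j)%:~R * ((g j e)%:~R * al e)).
  apply: eq_bigr => e _.
  rewrite (big_morph (fun z : int => (z%:~R : R)) (@intrD R) (mulr0z 1)).
  by rewrite mulr_suml; apply: eq_bigr => j _; rewrite intrM mulrA.
by rewrite exchange_big; apply: eq_bigr => j _; rewrite mulr_sumr.
Qed.

Lemma index_lin p (c : 'I_p -> int) (g : 'I_p -> E -> int) i :
  \sum_e (\sum_j c j * g j e) * tau e i
  = \sum_j c j * chain_index tau (g j) i.
Proof.
transitivity (\sum_e \sum_j c j * (g j e * tau e i)).
  by apply: eq_bigr => e _; rewrite mulr_suml; apply: eq_bigr => j _; rewrite mulrA.
by rewrite exchange_big; apply: eq_bigr => j _; rewrite mulr_sumr.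
Qed.

Lemma coordsP f : is_cycle src tgt f ->
  forall e, f e = comb bt b0 (coords bt b0 f).1 (coords bt b0 f).2 e.
Proof.
move=> Hf; rewrite /coords.
apply: (epsilon_spec _ (fun p => forall e, f e = comb bt b0 p.1 p.2 e)).
case: Hb => _ _ H _; have [nt [n0 Hn]] := H f Hf.
by exists (nt, n0).
Qed.

Lemma index_comb nt n0 i' : chain_index tau (comb bt b0 nt n0) i' = nt i'.
Proof.
rewrite /chain_index /comb.
under eq_bigr do rewrite mulrDl.
rewrite big_split /= !index_lin.
case: Hz => Hz1 _ _.
rewrite [X in _ + X]big1 ?addr0; last by move=> j _; rewrite (proj2 (Hz1 j)) mulr0.
rewrite (bigD1 i') //= big1 ?addr0; last first.
  by move=> i /negPf Hi; rewrite Hs Hi mulr0.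
by rewrite Hs eqxx mulr1.
Qed.

Lemma flux_comb (al : E -> R) nt n0 :
  chain_flux al (comb bt b0 nt n0)
  = \sum_i (nt i)%:~R * chain_flux al (bt i)
    + \sum_j (n0 j)%:~R * chain_flux al (b0 j).
Proof.
rewrite /chain_flux /comb.
under eq_bigr do rewrite intrD mulrDl.
by rewrite big_split /= !flux_lin.
Qed.

Lemma flux_projP (al : E -> R) f :
  chain_flux al (projP bt b0 f)
  = \sum_j ((coords bt b0 f).2 j)%:~R * chain_flux al (b0 j).
Proof. by rewrite /chain_flux /projP flux_lin. Qed.

Lemma flux_closed (al : E -> R) (s : seq W) :
  closed_walk src tgt s ->
  chain_flux al (chain_of_walk s)
  = \sum_i (walk_tau tau s i)%:~R * chain_flux al (bt i)
    + chain_flux al (projP bt b0 (chain_of_walk s)).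
Proof.
move=> Hc; have Hce := coordsP (cycle_walk Hc).
have Hn : forall i, (coords bt b0 (chain_of_walk s)).1 i = walk_tau tau s i.
  move=> i; rewrite -index_walk -(index_comb _ (coords bt b0 (chain_of_walk s)).2).
  apply: eq_bigr => e _.
  by rewrite -Hce.
have -> : chain_flux al (chain_of_walk s)
          = chain_flux al (comb bt b0 (coords bt b0 (chain_of_walk s)).1
                                      (coords bt b0 (chain_of_walk s)).2).
  by apply: eq_bigr => e _; rewrite -Hce.
rewrite flux_comb flux_projP; congr (_ + _).
by apply: eq_bigr => i _; rewrite Hn.
Qed.

Lemma phi_closed (al : E -> R) (kt : 'I_d -> R) (s : seq W) :
  closed_walk src tgt s ->
  \sum_(w <- s) wth tau al (fun i => kt i + k_o al bt i) w
  = phi_o tau al bt b0 s kt.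
Proof.
move=> Hc; rewrite wth_walk (flux_closed al Hc) /phi_o.
have -> : dotZR (walk_tau tau s) (fun i => kt i + k_o al bt i)
          = dotZR (walk_tau tau s) kt
            - \sum_i (walk_tau tau s i)%:~R * chain_flux al (bt i).
  rewrite /dotZR -sumrN -big_split /=; apply: eq_bigr => i _.
  by rewrite /k_o mulrDr mulrN.
lra.
Qed.

End Basis.
Lemma CS n (a : 'I_n -> int) :
  (\sum_i a i) ^+ 2 <= n%:Z * \sum_i a i ^+ 2.
Proof.
have H : 0 <= \sum_(i < n) \sum_(j < n) (a i - a j) ^+ 2.
  by apply: sumr_ge0 => i _; apply: sumr_ge0 => j _; exact: sqr_ge0.
have E1 : forall i, \sum_(j < n) (a i - a j) ^+ 2
   = a i ^+ 2 *+ n - (a i * \sum_j a j) *+ 2 + \sum_j a j ^+ 2.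
  move=> i; under eq_bigr do rewrite sqrrB.
  rewrite big_split sumrB /= sumr_const card_ord; congr (_ - _ + _).
  by rewrite mulr_sumr sumrMnl.
have E2 : \sum_(i < n) \sum_(j < n) (a i - a j) ^+ 2
   = (\sum_i a i ^+ 2) *+ n *+ 2 - ((\sum_i a i) ^+ 2) *+ 2.
  under eq_bigr do rewrite E1.
  rewrite big_split sumrB /= sumr_const card_ord sumrMnl sumrMnl.
  rewrite -mulr_suml -expr2.
  by rewrite addrAC -mulr2n.
move: H; rewrite E2 subr_ge0 ler_pMn2r //.
by rewrite -mulr_natl natz.
Qed.
Lemma sum_const_seq (T : Type) (s : seq T) (c : int) :
  \sum_(x <- s) c = (size s)%:Z * c.
Proof.
elim: s => [|x s IH]; first by rewrite big_nil mul0r.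
by rewrite big_cons IH /= -addn1 PoszD mulrDl mul1r addrC.
Qed.

Lemma sqnorm_ge0 d (m : 'I_d -> int) : 0 <= sqnormZ m.
Proof. by apply: sumr_ge0 => i _; exact: sqr_ge0. Qed.

Section Bounds.
Variables (d : nat) (Vt E : finType) (src tgt : E -> Vt)
  (tau : E -> 'I_d -> int).
Local Notation W := (Wt Vt E).

Lemma sqnorm_wtau (w : W) : sqnormZ (wtau tau w) <= (tau2max tau)%:Z.
Proof.
case: w => [[e b]|x] /=.
  have -> : sqnormZ (otau tau (e, b)) = sqnormZ (tau e).
    by apply: eq_bigr => i _; rewrite /otau /=; case: b => //; rewrite sqrrN.
  rewrite -(gez0_abs (sqnorm_ge0 (tau e))) lez_nat.
  exact: (leq_bigmax (F := fun e => `|sqnormZ (tau e)|%N) e).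
by rewrite /sqnormZ big1 // => i _; rewrite expr0n.
Qed.

Lemma sqnorm_walk n (t : n.-tuple W) :
  sqnormZ (walk_tau tau t) <= (n ^ 2 * tau2max tau)%N%:Z.
Proof.
rewrite /sqnormZ /walk_tau.
apply: (@le_trans _ _ (\sum_i n%:Z * \sum_(w <- t) wtau tau w i ^+ 2)).
  apply: ler_sum => i _; rewrite !(big_tuple _ _ t); exact: CS.
rewrite -mulr_sumr exchange_big /=.
apply: (@le_trans _ _ (n%:Z * \sum_(w <- t) (tau2max tau)%:Z)).
  apply: ler_wpM2l => //; apply: ler_sum => w _; exact: sqnorm_wtau.
by rewrite sum_const_seq size_tuple mulrA -!PoszM mulnn.
Qed.

Lemma coord_walk n (t : n.-tuple W) i :
  `|walk_tau tau t i| <= (n * tau2max tau)%N%:Z.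
Proof.
set x := walk_tau tau t i; set T := tau2max tau.
have Hx : x ^+ 2 <= (n ^ 2 * T)%N%:Z.
  apply: le_trans (sqnorm_walk t).
  by rewrite /sqnormZ (bigD1 i) //= lerDl; apply: sumr_ge0 => j _; exact: sqr_ge0.
have HT : (n ^ 2 * T <= (n * T) ^ 2)%N.
  rewrite expnMn leq_mul2l; apply/orP; right.
  by case: (T) => [|T'] //; rewrite expnS leq_pmulr.
rewrite -ler_sqr ?nnegrE // real_normK ?num_real //.
apply: le_trans Hx _.
have -> : ((n * T)%N%:Z) ^+ 2 = ((n * T) ^ 2)%N%:Z by rewrite -!natz natrX.
by rewrite lez_nat.
Qed.

End Bounds.
Definition flipa (E : Type) (a : E * bool) : E * bool := (a.1, ~~ a.2).
Lemma flipaK (E : Type) : involutive (@flipa E).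
Proof. by case=> e []. Qed.

Section Herm.
Variables (R : realType) (d : nat) (Vt E : finType) (src tgt : E -> Vt)
  (tau : E -> 'I_d -> int).

Lemma dotZR_opp (m1 m2 : 'I_d -> int) (k : 'I_d -> R) :
  m2 =1 (fun i => - m1 i) -> dotZR m2 k = - dotZR m1 k.
Proof.
by move=> H; rewrite /dotZR -sumrN; apply: eq_bigr => i _; rewrite H intrN mulNr.
Qed.

Lemma theta_flip (al : E -> R) (k : 'I_d -> R) (a : E * bool) :
  oalpha al (flipa a) + dotZR (otau tau (flipa a)) k
  = - (oalpha al a + dotZR (otau tau a) k).
Proof.
rewrite opprD; congr (_ + _).
  by case: a => e [] //=; rewrite opprK.
apply: dotZR_opp => i; by case: a => e [] //=; rewrite opprK.
Qed.

Lemma Hmat_tr al V k :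
  (Hmat src tgt tau al V k)^T = map_mx (@conjc R) (Hmat src tgt tau al V k).
Proof.
apply/matrixP => i j; rewrite !mxE (rmorphD (@conjc R)) (rmorph_sum (@conjc R)) /=; congr (_ + _).
  rewrite (reindex_inj (can_inj (@flipaK E))) /=.
  apply: eq_big => [a|a _].
    by case: a => e [] /=; rewrite andbC.
  by rewrite theta_flip expiN.
by case: (eqVneq i j) => [->|H]; rewrite ?conjc_real ?conjc0.
Qed.

End Herm.
Section MainI.
Variables (R : realType) (d : nat) (Vt E : finType) (src tgt : E -> Vt)
  (tau : E -> 'I_d -> int) (V : Vt -> R) (r : nat) (bt : 'I_d -> E -> int)
  (b0 : 'I_r -> E -> int).
Hypotheses (Hb : cycle_basis src tgt bt b0) (Hs : std_index tau bt)
  (Hz : zero_index_basis src tgt tau b0).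
Local Notation W := (Wt Vt E).

Variables (al : E -> R) (n : nat) (kt : 'I_d -> R).
Let k := fun i => kt i + k_o al bt i.
Let X := \tr (Hmat src tgt tau al V k ^+ n.+1).

Let Sp := \sum_(t : n.+1.-tuple W | closed_walk src tgt t)
   (walk_weight src tgt V t)%:C%C * expi (phi_o tau al bt b0 t kt).
Let Sm := \sum_(t : n.+1.-tuple W | closed_walk src tgt t)
   (walk_weight src tgt V t)%:C%C * expi (- phi_o tau al bt b0 t kt).

Lemma X_Sp : X = Sp.
Proof.
rewrite /X tr_Hmat; apply: eq_bigr => t Ht.
by rewrite (phi_closed Hb Hs Hz).
Qed.

Lemma X_real : conjc X = X.
Proof. by apply: tr_conj_pow; exact: Hmat_tr. Qed.

Lemma X_Sm : X = Sm.
Proof.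
rewrite -X_real X_Sp /Sp (rmorph_sum (@conjc R)); apply: eq_bigr => t _.
by rewrite (rmorphM (@conjc R)) expiN /= oppr0.
Qed.

Lemma X_cos : X = \sum_(t : n.+1.-tuple W | closed_walk src tgt t)
               (walk_weight src tgt V t * cos (phi_o tau al bt b0 t kt))%:C%C.
Proof.
apply: (@mulfI _ (2%:R : R[i])); first by rewrite pnatr_eq0.
have H2 : 2%:R * X = Sp + Sm by rewrite mulr_natl mulr2n {1}X_Sp X_Sm.
rewrite H2 [RHS]mulr_sumr.
rewrite /Sp /Sm -big_split /=; apply: eq_bigr => t _.
rewrite -mulrDr expi_cos (rmorphM (real_complex R)) /=.
by rewrite mulrCA.
Qed.

Lemma X_fourier :
  X = sum_ball tau n.+1
        (fun m => Tcoef src tgt tau al V bt b0 n.+1 m * expi (- dotZR m kt)).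
Proof.
rewrite X_Sm /Sm /sum_ball /=.
set N := (n.+1 * tau2max tau)%N.
pose j0 (t : n.+1.-tuple W) : {ffun 'I_d -> 'I_N.*2.+1} :=
  [ffun i => inord (absz (walk_tau tau t i + N%:Z))].
have Hb0 : forall t i, box_pt (j0 t) i = walk_tau tau t i.
  move=> t i; rewrite /box_pt ffunE.
  have := coord_walk tau t i; rewrite -/N ler_norml => /andP [H1 H2].
  rewrite inordK; last by lia.
  rewrite gez0_abs; last by lia.
  by rewrite addrK.
have HP : forall (t : n.+1.-tuple W) (j : {ffun 'I_d -> 'I_N.*2.+1}), [forall i, walk_tau tau t i == box_pt j i] = (j == j0 t).
  move=> t j; apply/forallP/eqP => [H|->]; last by move=> i; rewrite Hb0.
  apply/ffunP => i; apply: val_inj; rewrite /j0 ffunE.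
  have := coord_walk tau t i; rewrite -/N ler_norml => /andP [H1 H2].
  rewrite /= inordK; last by lia.
  have := eqP (H i); rewrite /box_pt => ->.
  by rewrite subrK absz_nat.
have Hcond : forall t, sqnormZ (box_pt (j0 t)) <= ((n.+1) ^ 2 * tau2max tau)%N%:Z.
  move=> t.
  have -> : sqnormZ (box_pt (j0 t)) = sqnormZ (walk_tau tau t).
    by apply: eq_bigr => i _; rewrite Hb0.
  exact: sqnorm_walk.
under eq_bigr => j _ do rewrite /Tcoef mulr_suml.
rewrite (exchange_big_dep xpredT) //=.
rewrite big_mkcond; apply: eq_bigr => t _.
case Hc: (closed_walk src tgt t) => /=.
  rewrite (eq_bigl (pred1 (j0 t))) ?big_pred1_eq; last first.
    move=> j /=; rewrite HP.
    by case: eqP => [->|] /=; rewrite ?andbT ?andbF ?Hcond.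
  rewrite -mulrA -expiD; congr (_ * expi _).
  rewrite /phi_o opprD; congr (_ - _).
  by apply: dotZR_ext => i; rewrite Hb0.
by rewrite big_pred0 // => j; rewrite andbF.
Qed.

End MainI.
Lemma eig_sim (R : realType) m (A B D : 'M[R[i]]_m) lam :
  D *m A = B *m D -> (forall v : 'rV_m, v *m D = 0 -> v = 0) ->
  eigenvalue B lam -> eigenvalue A lam.
Proof.
move=> HD Hinj /eigenvalueP [v Hv Hnz]; apply/eigenvalueP; exists (v *m D).
  by rewrite -mulmxA HD mulmxA Hv scalemxAl.
by apply: contra Hnz => /eqP H; apply/eqP; exact: Hinj.
Qed.

Section Gauge.
Variables (R : realType) (d : nat) (Vt E : finType) (src tgt : E -> Vt)
  (tau : E -> 'I_d -> int) (V : Vt -> R) (r : nat) (bt : 'I_d -> E -> int)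
  (b0 : 'I_r -> E -> int).
Hypotheses (Hb : cycle_basis src tgt bt b0) (Hs : std_index tau bt)
  (Hz : zero_index_basis src tgt tau b0)
  (Hcon : forall x y : Vt, connect (adjG src tgt) x y).
Local Notation W := (Wt Vt E).
Local Notation wsrc := (wsrc src tgt).
Local Notation wtgt := (wtgt src tgt).

Definition flipw (w : W) : W :=
  match w with inl a => inl (flipa a) | inr x => inr x end.
Definition revw (p : seq W) := rev (map flipw p).

Lemma wf_rev x p y : wf wsrc wtgt x p y -> wf wsrc wtgt y (revw p) x.
Proof.
elim: p x => [|w p IH] x /=; first by move=> /eqP ->; rewrite /= eqxx.
case/andP => /eqP Hw Hp; rewrite /revw map_cons rev_cons -cats1.
apply: (wf_cat (IH _ Hp)) => /=.
by case: w Hw {Hp} => [[e []]|z] /= Hw; rewrite /= -Hw !eqxx.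
Qed.

Lemma exists_walk x y : connect (adjG src tgt) x y ->
  exists p : seq W, wf wsrc wtgt x p y.
Proof.
move/connectP => [q Hq ->] {y}.
elim: q x Hq => [|z q IH] x /=; first by exists [::]; rewrite /= eqxx.
case/andP => /existsP [e He] /IH [p Hp].
case/orP: He => /andP [/eqP H1 /eqP H2].
  by exists (inl (e, true) :: p); rewrite /= /osrc /otgt /= H1 H2 eqxx.
by exists (inl (e, false) :: p); rewrite /= /osrc /otgt /= H1 H2 eqxx.
Qed.

Lemma wf_closed x (s : seq W) :
  wf wsrc wtgt x s x -> s != [::] -> closed_walk src tgt s.
Proof. by case: s => // w p; rewrite wf_cycle => /andP [_ H]. Qed.

Variables (a1 a2 : E -> R).
Hypothesis Hflux : forall j : 'I_r, exists z : int,
  chain_flux a1 (b0 j) = chain_flux a2 (b0 j) + z%:~R * (pi *+ 2).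

Let be := fun e => a1 e - a2 e.
Let q := k_o be bt.
Let gam := @wth R d Vt E tau be q.

Definition P2pi (x : R) := exists z : int, x = z%:~R * (pi *+ 2).

Lemma flux_be f : chain_flux be f = chain_flux a1 f - chain_flux a2 f.
Proof. by rewrite /chain_flux -sumrB; apply: eq_bigr => e _; rewrite mulrBr. Qed.

Lemma closed_int s : closed_walk src tgt s -> P2pi (\sum_(w <- s) gam w).
Proof.
move=> Hc; rewrite /gam wth_walk (flux_closed Hb Hs Hz be Hc) flux_projP.
have -> : dotZR (walk_tau tau s) q
          = - \sum_i (walk_tau tau s i)%:~R * chain_flux be (bt i).
  by rewrite /dotZR -sumrN; apply: eq_bigr => i _; rewrite /q /k_o mulrN.
have Hab : forall A B : R, A + B - A = B by move=> A B; rewrite addrAC subrr add0r.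
rewrite Hab.
apply: (big_ind P2pi).
- by exists 0; rewrite mul0r.
- by move=> x y [zx ->] [zy ->]; exists (zx + zy); rewrite intrD mulrDl.
- move=> j _; have [z Hj] := Hflux j.
  exists ((coords bt b0 (chain_of_walk s)).2 j * z).
  by rewrite flux_be Hj addrAC subrr add0r intrM mulrA.
Qed.

Lemma expi_P2pi x : P2pi x -> expi x = 1.
Proof. by case=> z ->; exact: expi2pi. Qed.

Lemma gam_flip w : gam (flipw w) = - gam w.
Proof. by case: w => [a|x] /=; [exact: theta_flip | rewrite oppr0]. Qed.

Lemma sum_revw p : \sum_(w <- revw p) gam w = - \sum_(w <- p) gam w.
Proof.
rewrite /revw big_rev big_map -sumrN; apply: eq_bigr => w _.
exact: gam_flip.
Qed.

Section Root.
Variable r0 : Vt.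

Definition pw (v : Vt) : seq W :=
  epsilon (inhabits [::]) (fun p => wf wsrc wtgt r0 p v).

Lemma pwP v : wf wsrc wtgt r0 (pw v) v.
Proof.
rewrite /pw; apply: (epsilon_spec _ (fun p => wf wsrc wtgt r0 p v)).
exact: exists_walk.
Qed.

Definition Wf (v : Vt) : R := \sum_(w <- pw v) gam w.

Lemma u_edge (a : E * bool) :
  expi (Wf (otgt src tgt a)) = expi (Wf (osrc src tgt a)) * expi (gam (inl a)).
Proof.
set s := pw (osrc src tgt a) ++ inl a :: revw (pw (otgt src tgt a)).
have Hw : wf wsrc wtgt r0 s r0.
  apply: (wf_cat (pwP _)) => /=; rewrite eqxx /=.
  exact: wf_rev (pwP _).
have Hc : closed_walk src tgt s.
  by apply: (wf_closed Hw); rewrite /s; case: (pw _).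
have := expi_P2pi (closed_int Hc).
rewrite /s big_cat big_cons sum_revw -/(Wf _) -/(Wf _).
move=> H; rewrite -expiD -[LHS]mulr1 -H -expiD; congr expi.
rewrite /=; lra.
Qed.

End Root.

Lemma gauge (k : 'I_d -> R) lam :
  eigenvalue (Hmat src tgt tau a2 V k) lam ->
  exists k', eigenvalue (Hmat src tgt tau a1 V k') lam.
Proof.
move=> Heig; case: (pickP (@predT Vt)) => [r0 _|H0]; last first.
  exists k; suff -> : Hmat src tgt tau a1 V k = Hmat src tgt tau a2 V k by [].
  by apply/matrixP => i; have := H0 (enum_val i).
exists (fun i => k i + q i).
set u := \row_(i < #|Vt|) expi (Wf r0 (enum_val i)).
apply: (@eig_sim R _ _ (Hmat src tgt tau a2 V k) (diag_mx u)).
  rewrite mul_diag_mx mul_mx_diag; apply/matrixP => i j; rewrite !mxE.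
  rewrite mulrDr mulrDl; congr (_ + _).
    rewrite mulr_sumr mulr_suml; apply: eq_bigr => a /andP [/eqP H1 /eqP H2].
    rewrite -H1 -H2 u_edge mulrCA -!expiD; congr expi.
    rewrite /gam /=.
    have -> : oalpha be a = oalpha a1 a - oalpha a2 a.
      by case: (a) => e [] /=; rewrite /be /oalpha /= ?opprB ?opprK 1?addrC.
    have -> : dotZR (otau tau a) (fun i0 => k i0 + q i0)
              = dotZR (otau tau a) k + dotZR (otau tau a) q.
      by rewrite /dotZR -big_split; apply: eq_bigr => i0 _; rewrite mulrDr.
    lra.
  case: (eqVneq i j) => [->|Hij]; first by rewrite mulrC.
  by rewrite mulr0 mul0r.
move=> v Hv; apply/matrixP => i j.
have := congr1 (fun M : 'M_(1, #|Vt|) => M i j) Hv.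
rewrite mul_mx_diag !mxE => /eqP; rewrite mulf_eq0 (negbTE (expi_neq0 _)) orbF.
  by move/eqP.
exact: Heig.
Qed.

End Gauge.
Theorem corollary3p7 (R : realType) (d r : nat) (Vt E : finType)
  (src tgt : E -> Vt) (tau : E -> 'I_d -> int) (V : Vt -> R)
  (bt : 'I_d -> E -> int) (b0 : 'I_r -> E -> int) :
  (0 < d)%N ->
  (forall x y : Vt, connect (adjG src tgt) x y) ->
  cycle_basis src tgt bt b0 ->
  std_index tau bt ->
  zero_index_basis src tgt tau b0 ->
  (* (i) *)
  (forall (alpha : E -> R) (n : nat) (kt : 'I_d -> R), (0 < n)%N ->
     let k := fun i => kt i + k_o alpha bt i in
     [/\ \tr (Hmat src tgt tau alpha V k ^+ n)
           = \sum_(t : n.-tuple (Wt Vt E) | closed_walk src tgt t)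
               (walk_weight src tgt V t)%:C%C
                 * expi (- phi_o tau alpha bt b0 t kt),
         \tr (Hmat src tgt tau alpha V k ^+ n)
           = \sum_(t : n.-tuple (Wt Vt E) | closed_walk src tgt t)
               (walk_weight src tgt V t
                  * cos (phi_o tau alpha bt b0 t kt))%:C%C
       & \tr (Hmat src tgt tau alpha V k ^+ n)
           = sum_ball tau n (fun m =>
               Tcoef src tgt tau alpha V bt b0 n m * expi (- dotZR m kt))]) /\
  (* (i), case beta = d *)
  (r = 0%N ->
     (forall f : E -> int, is_cycle src tgt f ->
        forall e, projP bt b0 f e = 0) /\
     (forall (alpha : E -> R) (n : nat) (kt : 'I_d -> R), (0 < n)%N ->
        \tr (Hmat src tgt tau alpha V (fun i => kt i + k_o alpha bt i) ^+ n)
          = \tr (Hmat src tgt tau (fun _ => 0) V kt ^+ n))) /\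
  (* (ii) *)
  (forall alpha1 alpha2 : E -> R,
     (forall j : 'I_r, exists z : int,
        chain_flux alpha1 (b0 j) = chain_flux alpha2 (b0 j) + z%:~R * (pi *+ 2)) ->
     forall lam : R[i], in_spectrum src tgt tau alpha1 V lam <-> in_spectrum src tgt tau alpha2 V lam).
Proof.
move=> Hd Hcon Hb Hs Hz; split; [|split].
- move=> al n kt Hn k; case: n Hn => [|n] // _; split.
  + exact: (X_Sm V Hb Hs Hz al n kt).
  + exact: (X_cos V Hb Hs Hz al n kt).
  + exact: (X_fourier V Hb Hs Hz al n kt).
- move=> Hr; subst r; split.
    by move=> f Hf e; rewrite /projP big_ord0.
  move=> al n kt Hn; case: n Hn => [|n] // _.
  rewrite (X_Sp V Hb Hs Hz al n kt) tr_Hmat; apply: eq_bigr => t Hc.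
  rewrite wth_walk /phi_o; congr (_ * expi (_ + _)).
  rewrite /chain_flux big1; last by move=> e _; rewrite /projP big_ord0 mul0r.
  by rewrite big1 // => e _; rewrite mulr0.
- move=> a1 a2 Hf lam; split => [[k Hk]|[k Hk]].
    have Hf' : forall j : 'I_r, exists z : int,
        chain_flux a2 (b0 j) = chain_flux a1 (b0 j) + z%:~R * (pi *+ 2).
      move=> j; have [z ->] := Hf j; exists (- z).
      by rewrite intrN mulNr addrK.
    exact: (gauge Hb Hs Hz Hcon Hf' Hk).
  exact: (gauge Hb Hs Hz Hcon Hf Hk).
Qed.
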